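(* For $n\ge3$, the number of cyclic permutations $\pi\in\mathfrak S_n$ whose one-line notation avoids $321$ and such that every cyclic rotation of the cycle form $C(\pi)$ avoids $1342$ equals $n-1$.
   Context: A permutation $\pi\in\mathfrak S_n$ is cyclic if it consists of a single $n$-cycle. For cyclic $\pi$, $C(\pi)=(1,c_2,\dots,c_n)$ with $c_2=\pi(1)$, $c_{i+1}=\pi(c_i)$; its cyclic rotations are the sequences $c_ic_{i+1}\cdots c_nc_1\cdots c_{i-1}$ (with $c_1=1$). A sequence avoids a pattern $\sigma\in\mathfrak S_m$ if no subsequence of length $m$ is in the same relative order as $\sigma$. *)

(* Defs.v *)
From mathcomp Require Import all_boot all_fingroup.
Set Implicit Arguments. Unset Strict Implicit. Unset Printing Implicit Defensive.

Definition contains (w p : seq nat) : bool :=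
  [exists m : (size w).-tuple bool,
     let t := mask m w in
     (size t == size p) &&
     [forall i : 'I_(size p), forall j : 'I_(size p),
        (nth 0 t i < nth 0 t j) == (nth 0 p i < nth 0 p j)]].

Definition avoids (w p : seq nat) : bool := ~~ contains w p.

(* Permutations of 'I_n = {0,...,n-1}; we shift by one so that entries are
   in {1,...,n} as in the paper. *)
Definition one_line n (s : 'S_n) : seq nat := [seq (val (s i)).+1 | i <- enum 'I_n].

Definition cyclic_perm n (s : 'S_n) : bool := porbits s == [set [set: 'I_n]].

Definition perm_nat n (s : 'S_n) (k : nat) : nat :=
  if insub k is Some i then val (s i) else k.

(* Cycle form C(s) = (1, s(1), s(s(1)), ...), n entries, 1-based. *)
Definition cycle_form n (s : 'S_n) : seq nat :=
  [seq (iter k (perm_nat s) 0).+1 | k <- iota 0 n].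

Definition all_rotations_avoid (c p : seq nat) : bool :=
  all (fun i => avoids (rot i c) p) (iota 0 (size c)).

(* Main.v *)
Require Import Defs.
From mathcomp Require Import all_boot all_fingroup.
From mathcomp Require Import zify.
Set Implicit Arguments. Unset Strict Implicit. Unset Printing Implicit Defensive.

Lemma containsP (h : nat -> nat) n p :
  contains [seq h k | k <- iota 0 n] p ->
  exists ids, [/\ subseq ids (iota 0 n), size ids = size p &
    forall i j, i < size p -> j < size p ->
      (h (nth 0 ids i) < h (nth 0 ids j)) = (nth 0 p i < nth 0 p j)].
Proof.
case/existsP => m /andP [/eqP Hs /forallP H].
rewrite -map_mask size_map in Hs.
exists (mask m (iota 0 n)); split => //; first exact: mask_subseq.
move=> i j Hi Hj.
have := H (Ordinal Hi) => /forallP /(_ (Ordinal Hj)) /eqP /=.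
by rewrite -map_mask !(nth_map 0) ?Hs.
Qed.

Lemma containsI (h : nat -> nat) n p ids :
  subseq ids (iota 0 n) -> size ids = size p ->
  (forall i j, i < size p -> j < size p ->
      (h (nth 0 ids i) < h (nth 0 ids j)) = (nth 0 p i < nth 0 p j)) ->
  contains [seq h k | k <- iota 0 n] p.
Proof.
move=> /subseqP [m Hm ->] Hs H.
have Hm' : size m == size [seq h k | k <- iota 0 n] by rewrite size_map Hm.
apply/existsP; exists (Tuple Hm') => /=.
rewrite -map_mask size_map Hs eqxx /=.
apply/forallP => i; apply/forallP => j.
rewrite !(nth_map 0) ?Hs //; by apply/eqP; apply: H.
Qed.

Lemma subseq_iota_sorted s n :
  subseq s (iota 0 n) -> sorted ltn s /\ all (fun i => i < n) s.
Proof.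
move=> Hs; split.
  exact: (subseq_sorted ltn_trans Hs (iota_ltn_sorted 0 n)).
apply/allP => i /(mem_subseq Hs); by rewrite mem_iota.
Qed.

Lemma sorted_subseq_iota s n :
  sorted ltn s -> all (fun i => i < n) s -> subseq s (iota 0 n).
Proof.
move=> Hs Ha.
have -> : s = filter (mem s) (iota 0 n).
  apply: (irr_sorted_eq ltn_trans ltnn) => //.
    exact: (sorted_filter ltn_trans _ (iota_ltn_sorted 0 n)).
  move=> x; rewrite mem_filter mem_iota /=.
  case Hx: (x \in s) => //=; by move/allP: Ha => /(_ x Hx) ->.
exact: filter_subseq.
Qed.

Lemma c321 (h : nat -> nat) n :
  contains [seq h k | k <- iota 0 n] [:: 3; 2; 1] <->
  exists i j k, [/\ i < j, j < k, k < n, h k < h j & h j < h i].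
Proof.
split.
  case/containsP => ids [Hs Hsz H].
  case: ids Hs Hsz H => [|i [|j [|k [|]]]] //= Hs _ H.
  case/subseq_iota_sorted: Hs => /= /and3P [H1 H2 _] /and4P [_ _ H3 _].
  exists i, j, k; split => //.
    by have := H 2 1 erefl erefl => /= ->.
  by have := H 1 0 erefl erefl => /= ->.
case=> i [j [k [H1 H2 H3 H4 H5]]].
apply: (containsI (ids := [:: i; j; k])) => //.
  apply: sorted_subseq_iota => /=; first by rewrite H1 H2.
  by repeat (apply/andP; split); lia.
move=> [|[|[|a]]] [|[|[|b]]] //= _ _; lia.
Qed.

Lemma c1342 (h : nat -> nat) n :
  contains [seq h k | k <- iota 0 n] [:: 1; 3; 4; 2] <->
  exists i j k l, [/\ i < j, j < k, k < l, l < n &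
                    [/\ h i < h l, h l < h j & h j < h k]].
Proof.
split.
  case/containsP => ids [Hs Hsz H].
  case: ids Hs Hsz H => [|i [|j [|k [|l [|]]]]] //= Hs _ H.
  case/subseq_iota_sorted: Hs => /= /and4P [H1 H2 H3 _] /and5P [_ _ _ H4 _].
  exists i, j, k, l; split => //; split.
  - by have := H 0 3 erefl erefl => /= ->.
  - by have := H 3 1 erefl erefl => /= ->.
  - by have := H 1 2 erefl erefl => /= ->.
case=> i [j [k [l [H1 H2 H3 H4 [H5 H6 H7]]]]].
apply: (containsI (ids := [:: i; j; k; l])) => //.
  apply: sorted_subseq_iota => /=; first by rewrite H1 H2 H3.
  by repeat (apply/andP; split); lia.
move=> [|[|[|[|a]]]] [|[|[|[|b]]]] //= _ _; lia.
Qed.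
Definition Fp (n a i : nat) : nat :=
  if i < a then i.+1 else if i == a then n else if i == a.+1 then 0 else i.-1.
Definition Xp (n a k : nat) : nat := if k <= a then k else n + a.+1 - k.
Definition Pr (N r k : nat) : nat := if k + r < N then k + r else k + r - N.

Lemma Fp_lt n a i : a < n -> i < n.+1 -> Fp n a i < n.+1.
Proof. rewrite /Fp; repeat case: ifP; lia. Qed.

Lemma Fp_inj n a i j : a < n -> i < n.+1 -> j < n.+1 -> Fp n a i = Fp n a j -> i = j.
Proof. rewrite /Fp; repeat case: ifP; lia. Qed.

Lemma FpX n a k : a < n -> k < n -> Fp n a (Xp n a k) = Xp n a k.+1.
Proof. rewrite /Fp /Xp; repeat case: ifP; lia. Qed.

Lemma Fp_321 n a i j k : a < n -> i < j -> j < k -> k < n.+1 ->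
  Fp n a k < Fp n a j -> Fp n a j < Fp n a i -> False.
Proof. rewrite /Fp; repeat case: ifP; lia. Qed.

Lemma Xp_1342 n a r i j k l : a < n -> r < n.+1 -> i < j -> j < k -> k < l -> l < n.+1 ->
  Xp n a (Pr n.+1 r i) < Xp n a (Pr n.+1 r l) ->
  Xp n a (Pr n.+1 r l) < Xp n a (Pr n.+1 r j) ->
  Xp n a (Pr n.+1 r j) < Xp n a (Pr n.+1 r k) -> False.
Proof.
move=> Ha Hr H1 H2 H3 H4.
rewrite /Pr; case: ifP => E1; case: ifP => E2; case: ifP => E3; case: ifP => E4; try lia;
rewrite /Xp; repeat case: ifP; lia.
Qed.
Lemma shift_lemma (g : nat -> nat) lo c L :
  (forall i j, i < j -> j < c -> g (lo + i) < g (lo + j)) ->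
  (forall i, i < c -> L <= g (lo + i) < L + c) ->
  forall i, i < c -> g (lo + i) = L + i.
Proof.
move=> Hinc Hb.
have lo_b : forall i, i < c -> L + i <= g (lo + i).
  elim=> [|i IH] Hi; first by have := Hb 0 Hi; lia.
  have := IH (ltnW Hi); have := Hinc i i.+1 (ltnSn i) Hi; lia.
have up_b : forall d, d < c -> g (lo + (c - d.+1)) + d < L + c.
  elim=> [|d IH] Hd; first by have := Hb (c - 1); rewrite subn1; lia.
  have := IH (ltnW Hd); have := Hinc (c - d.+2) (c - d.+1); lia.
move=> i Hi; have := lo_b i Hi; have := up_b (c - i.+1).
have -> : c - (c - i.+1).+1 = i by lia.
lia.
Qed.

Section Core.
Variables (n : nat) (f : nat -> nat).
Hypothesis hn : 2 <= n.
Hypothesis Hf : forall i, i < n.+1 -> f i < n.+1.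
Hypothesis Hinj : forall i j, i < n.+1 -> j < n.+1 -> f i = f j -> i = j.
Hypothesis Hsurj : forall v, v < n.+1 -> exists2 j, j < n.+1 & f j = v.
Let x k := iter k f 0.
Hypothesis Hxd : forall k1 k2, k1 < n.+1 -> k2 < n.+1 -> x k1 = x k2 -> k1 = k2.
Hypothesis HxN : x n.+1 = 0.
Hypothesis H321 : forall i j k, i < j -> j < k -> k < n.+1 ->
  f k < f j -> f j < f i -> False.
Hypothesis H1342 : forall i j k l, i < j -> j < k -> k < l -> l < n.+1 ->
  x i < x l -> x l < x j -> x j < x k -> False.

Lemma core : exists2 a, a < n & forall i, i < n.+1 -> f i = Fp n a i.
Proof.
have xS k : x k.+1 = f (x k) by [].
have xlt k : x k < n.+1 by elim: k => [|k IH] //; rewrite xS Hf.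
have x0 : x 0 = 0 by [].
have xsurj v : v < n.+1 -> exists2 k, k < n.+1 & x k = v.
  move=> Hv.
  have U : uniq [seq x k | k <- iota 0 n.+1].
    rewrite map_inj_in_uniq ?iota_uniq // => k1 k2; rewrite !mem_iota /=.
    by move=> H1 H2; apply: Hxd.
  have S : {subset [seq x k | k <- iota 0 n.+1] <= iota 0 n.+1}.
    by move=> y /mapP [k _ ->]; rewrite mem_iota /= xlt.
  have [_ E] := uniq_min_size U S (eq_leq (esym (size_map _ _))).
  have : v \in iota 0 n.+1 by rewrite mem_iota.
  by rewrite -E => /mapP [k]; rewrite mem_iota /= => Hk ->; exists k.
have [m Hm xm] := xsurj n (ltnSn n).
have m1 : 0 < m.
  by case: m Hm xm => // _; rewrite x0; lia.
have xne k1 k2 : k1 < n.+1 -> k2 < n.+1 -> k1 != k2 -> x k1 != x k2.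
  by move=> H1 H2 /eqP H3; apply/eqP => /(Hxd H1 H2).
have F1 i k : 0 < i -> i < m -> m < k -> k < n.+1 -> x i < x k.
  move=> H1 H2 H3 H4; case: (ltngtP (x i) (x k)) => // H5.
    exfalso; have := @H1342 0 i m k H1 H2 H3 H4.
    have := xne 0 k erefl H4; have := xne i m ltac:(lia) Hm ltac:(lia).
    have := xlt i; rewrite xm x0; lia.
  by have := Hxd (k1:=i) (k2 := k); lia.
have xuniq a c : a + c <= n.+1 -> uniq [seq x k | k <- iota a c].
  move=> Hac; rewrite map_inj_in_uniq ?iota_uniq // => k1 k2; rewrite !mem_iota.
  move=> H1 H2; apply: Hxd; lia.
have xin i : i < n.+1 -> i != m -> x i < n.
  move=> H1 H2; have := xne i m H1 Hm H2; have := xlt i; rewrite xm; lia.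
have F2 i : i < m -> x i < m.
  move=> Hi; case: i Hi => [|i] Hi; first by rewrite x0.
  have U := xuniq m.+1 (n - m) ltac:(lia).
  have S : {subset [seq x k | k <- iota m.+1 (n - m)] <= iota (x i.+1).+1 (n - (x i.+1).+1)}.
    move=> y /mapP [k]; rewrite mem_iota => Hk ->; rewrite mem_iota.
    have := F1 i.+1 k erefl Hi ltac:(lia) ltac:(lia).
    have := xin k ltac:(lia) ltac:(lia). lia.
  have := uniq_leq_size U S; rewrite !size_map !size_iota.
  have := xin i.+1 ltac:(lia) ltac:(lia); lia.
have F3 k : k < n.+1 -> x k < m -> k < m.
  move=> Hk Hxk.
  have U := xuniq 0 m ltac:(lia).
  have S : {subset [seq x k | k <- iota 0 m] <= iota 0 m}.
    by move=> y /mapP [j]; rewrite !mem_iota => Hj ->; rewrite /= F2 //; lia.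
  have [_ E] := uniq_min_size U S (eq_leq (esym (size_map _ _))).
  have : x k \in iota 0 m by rewrite mem_iota.
  rewrite -E => /mapP [j]; rewrite mem_iota => Hj /Hxd.
  move=> H; rewrite H //; lia.
case: m Hm xm m1 F1 F2 F3 xin => // m' Hm xm _ F1 F2 F3 xin.
set a := x m'.
have fa : f a = n by rewrite -xm.
have am : a < m'.+1 by apply: F2.
have G1 j : m'.+1 <= j -> j < n.+1 -> f j = 0 \/ m'.+1 <= f j.
  move=> H1 H2; have [k Hk xk] := xsurj j H2.
  have km : m'.+1 <= k by case: (ltnP k m'.+1) => // /F2; lia.
  case: (ltnP k n) => Hkn.
    right; rewrite -xk -xS; case: (ltnP (x k.+1) m'.+1) => // /F3; lia.
  left; have E : k = n by lia.
  by rewrite -xk E -xS HxN.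
have G2 j : j < m'.+1 -> j != a -> 0 < f j < m'.+1.
  move=> H1 H2; have [k Hk xk] := xsurj j ltac:(lia).
  have km : k < m'.+1 by apply: F3; rewrite // xk.
  have km' : k != m' by apply/eqP => E; move: H2; rewrite -xk E eqxx.
  rewrite -xk -xS F2 ?andbT; last lia.
  have := xne 0 k.+1 erefl ltac:(lia) erefl; rewrite x0; lia.
have [b Hb fb] := Hsurj (v := 0) erefl.
have bm : m'.+1 <= b.
  case: (ltnP b m'.+1) => // H.
  case: (eqVneq b a) => [E|E]; first by move: fb; rewrite E fa; lia.
  by have := G2 b H E; rewrite fb.
have faN : forall j, j < n.+1 -> f j = n -> j = a.
  move=> j Hj E; apply: Hinj => //; first lia; by rewrite fa.
have bE : b = m'.+1.
  case: (ltngtP b m'.+1) => // H; first lia.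
  exfalso.
  have := G1 m'.+1 (leqnn _) ltac:(lia); case => H2.
    by have := @Hinj m'.+1 b ltac:(lia) Hb; rewrite fb H2; lia.
  have := faN m'.+1 ltac:(lia); have := @Hf m'.+1 ltac:(lia).
  move=> H3 H4.
  have := @H321 a m'.+1 b; rewrite fb fa.
  case: (eqVneq (f m'.+1) n) => [/H4|] ?; lia.
have fm : f m'.+1 = 0 by rewrite -bE.
have aE : a = m'.
  case: (ltngtP a m') => // H; last lia.
  have := G2 m' (ltnSn _) ltac:(lia); have := @H321 a m' m'.+1; rewrite fm fa.
  lia.
have fa' : f m' = n by rewrite -aE.
have up j : m'.+1 < j -> j < n.+1 -> m'.+1 <= f j < n.
  move=> H1 H2.
  have h0 : f j != 0.
    by apply/eqP => E; have := @Hinj j m'.+1 H2 Hm; rewrite fm E; lia.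
  have hn' : f j != n by apply/eqP => /(faN _ H2); lia.
  have := G1 j ltac:(lia) H2; have := @Hf j H2; lia.
have upinc i j : i < j -> j < n - m'.+1 -> f (m'.+2 + i) < f (m'.+2 + j).
  move=> H1 H2.
  case: (ltngtP (f (m'.+2 + i)) (f (m'.+2 + j))) => // H.
    have := up (m'.+2 + i) ltac:(lia) ltac:(lia).
    by have := @H321 m' (m'.+2 + i) (m'.+2 + j); rewrite fa'; lia.
  by have := @Hinj (m'.+2 + i) (m'.+2 + j) ltac:(lia) ltac:(lia) H; lia.
have upE := @shift_lemma f m'.+2 (n - m'.+1) m'.+1 upinc
  ltac:(move=> i Hi; have := up (m'.+2 + i) ltac:(lia) ltac:(lia); lia).
have lo j : j < m' -> 0 < f j < m'.+1.
  by move=> H; apply: G2; rewrite ?aE; lia.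
have loinc i j : i < j -> j < m' -> f (0 + i) < f (0 + j).
  move=> H1 H2; rewrite !add0n.
  case: (ltngtP (f i) (f j)) => // H.
    have := lo j H2; have := @H321 i j m'.+1; rewrite fm; lia.
  by have := @Hinj i j ltac:(lia) ltac:(lia) H; lia.
have loE := @shift_lemma f 0 m' 1 loinc
  ltac:(move=> i Hi; have := lo i Hi; rewrite add0n; lia).
exists m'; first lia.
move=> i Hi; rewrite /Fp.
case: ltnP => H1.
  by have := loE i H1; rewrite add0n add1n.
case: eqVneq => [->|H2] //.
case: eqVneq => [->|H3] //.
have := upE (i - m'.+2) ltac:(lia).
have -> : m'.+2 + (i - m'.+2) = i by lia.
move=> ->; lia.
Qed.
End Core.
Lemma perm_natE N (s : 'S_N) (i : 'I_N) : perm_nat s i = s i.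
Proof.
rewrite /perm_nat; case: insubP => [j _ /val_inj -> //|]; by rewrite ltn_ord.
Qed.

Lemma val_iter N (s : 'S_N) k i : val (iter k s i) = iter k (perm_nat s) (val i).
Proof. elim: k => [//|k IH] /=; by rewrite -IH perm_natE. Qed.

Lemma one_lineE N (s : 'S_N) :
  one_line s = [seq (perm_nat s k).+1 | k <- iota 0 N].
Proof.
rewrite /one_line -val_enum_ord -map_comp; apply: eq_map => i /=.
by rewrite perm_natE.
Qed.

Lemma rot_map_iota (h : nat -> nat) N r : r < N ->
  rot r [seq h k | k <- iota 0 N] =
  [seq h (if k + r < N then k + r else k + r - N) | k <- iota 0 N].
Proof.
move=> Hr.
have E1 : iota 0 N = iota 0 r ++ iota r (N - r) by rewrite -iotaD; congr iota; lia.
have E2 : iota 0 N = iota 0 (N - r) ++ iota (N - r) r by rewrite -iotaD; congr iota; lia.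
rewrite -map_rot {1}E1 -{1}(size_iota 0 r) rot_size_cat {1}E2 !map_cat.
congr (_ ++ _).
  rewrite -{1}(addn0 r) iotaDl -map_comp; apply/eq_in_map => k; rewrite mem_iota /=.
  by move=> H; rewrite ifT; [congr h; lia | lia].
rewrite -{1}(addn0 (N - r)) iotaDl -map_comp; apply/eq_in_map => k; rewrite mem_iota /=.
move=> H; rewrite ifF; [congr h; lia | lia].
Qed.

Definition gfun n (a : nat) (i : 'I_n.+1) : 'I_n.+1 := inord (Fp n a i).
Arguments gfun : clear implicits.

Lemma gfun_inj n a : a < n -> injective (gfun n a).
Proof.
move=> Ha i j /(congr1 (@nat_of_ord _)); rewrite /gfun !inordK ?Fp_lt //.
by move=> /(Fp_inj Ha (ltn_ord i) (ltn_ord j)) /val_inj.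
Qed.

Definition gperm n (a : 'I_n) : 'S_n.+1 := perm (gfun_inj (ltn_ord a)).

Lemma perm_nat_g n (a : 'I_n) k : k < n.+1 -> perm_nat (gperm a) k = Fp n a k.
Proof.
move=> Hk; have -> : k = val (Ordinal Hk) by [].
by rewrite perm_natE permE /gfun inordK // Fp_lt.
Qed.

Lemma iter_g n (a : 'I_n) k : k <= n -> iter k (perm_nat (gperm a)) 0 = Xp n a k.
Proof.
have Ha := ltn_ord a.
elim: k => [|k IH] Hk; first by rewrite /Xp.
rewrite iterS IH; last lia.
rewrite perm_nat_g ?FpX //; last (rewrite /Xp; case: ifP; lia).
Qed.

Lemma gperm_inj n : injective (@gperm n).
Proof.
move=> a1 a2 E; have := congr1 (fun p => perm_nat p a1) E => /=.
have H1 := ltn_ord a1; have H2 := ltn_ord a2.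
rewrite !perm_nat_g; last lia; last lia.
move=> H; apply: ord_inj; move: H; rewrite /Fp; repeat case: ifP; lia.
Qed.

Lemma g_in n (a : 'I_n) : 2 <= n ->
  [&& cyclic_perm (gperm a),
      avoids (one_line (gperm a)) [:: 3; 2; 1] &
      all_rotations_avoid (cycle_form (gperm a)) [:: 1; 3; 4; 2]].
Proof.
move=> hn; have Ha := ltn_ord a.
apply/and3P; split.
- rewrite /cyclic_perm.
  have P0 : porbit (gperm a) ord0 = setT.
    apply/setP => y; rewrite inE; apply/porbitP.
    have Hy := ltn_ord y.
    exists (if y <= a then nat_of_ord y else n + a.+1 - y); apply: ord_inj.
    rewrite permX val_iter /= iter_g; last (case: ifP; lia).
    rewrite /Xp; case: (leqP y a) => H1; [by rewrite H1 | case: ifP => H2; lia].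
  apply/eqP/setP => A; rewrite in_set1; apply/imsetP/eqP => [[x _ ->]|->].
    by apply/eqP; rewrite -P0 eq_porbit_mem P0 inE.
  by exists ord0; rewrite // P0.
- rewrite /avoids one_lineE; apply/negP => /c321 [i [j [k [H1 H2 H3 H4 H5]]]].
  rewrite !perm_nat_g in H4 H5; try lia.
  apply: (Fp_321 Ha H1 H2 H3); lia.
- apply/allP => r; rewrite /cycle_form size_map size_iota mem_iota add0n => /andP [_ Hr].
  rewrite /avoids rot_map_iota //; apply/negP => /c1342 [i [j [k [l [H1 H2 H3 H4 [H5 H6 H7]]]]]].
  have E q : q < n.+1 -> iter (if q + r < n.+1 then q + r else q + r - n.+1)
      (perm_nat (gperm a)) 0 = Xp n a (Pr n.+1 r q).
    by move=> Hq; rewrite iter_g // /Pr; case: ifP; lia.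
  have Ei := E i ltac:(lia); have Ej := E j ltac:(lia).
  have Ek := E k ltac:(lia); have El := E l ltac:(lia).
  rewrite Ei Ej Ek El in H5 H6 H7.
  apply: (Xp_1342 Ha Hr H1 H2 H3 H4); lia.
Qed.

Lemma g_surj n (s : 'S_n.+1) : 2 <= n ->
  [&& cyclic_perm s,
      avoids (one_line s) [:: 3; 2; 1] &
      all_rotations_avoid (cycle_form s) [:: 1; 3; 4; 2]] ->
  exists a, s = gperm a.
Proof.
move=> hn /and3P [cyc av321 avrot].
have P0 : porbit s ord0 = setT.
  have : porbit s ord0 \in porbits s by apply: imset_f.
  by rewrite (eqP cyc) in_set1 => /eqP.
have cardP : #|porbit s ord0| = n.+1 by rewrite P0 cardsT card_ord.
have U := uniq_traject_porbit s ord0; rewrite cardP in U.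
have xE k : iter k (perm_nat s) 0 = val (iter k s ord0) by rewrite val_iter.
have [a Ha Hfa] : exists2 a, a < n & forall i, i < n.+1 -> perm_nat s i = Fp n a i.
  apply: (@core n (perm_nat s) hn).
  - move=> i Hi; have -> : i = val (Ordinal Hi) by [].
    by rewrite perm_natE ltn_ord.
  - move=> i j Hi Hj; have -> : i = val (Ordinal Hi) by [].
    have -> : j = val (Ordinal Hj) by [].
    by rewrite !perm_natE => /val_inj /perm_inj ->.
  - move=> v Hv; exists (val ((s^-1)%g (Ordinal Hv))); first exact: ltn_ord.
    by rewrite perm_natE permKV.
  - move=> k1 k2 H1 H2; rewrite !xE -(nth_traject s H1 ord0) -(nth_traject s H2 ord0).
    move/val_inj/eqP; rewrite nth_uniq ?size_traject //; by move/eqP.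
  - by rewrite xE; have := iter_porbit s ord0; rewrite cardP => ->.
  - move=> i j k H1 H2 H3 H4 H5; move/negP: av321; apply.
    rewrite one_lineE; apply/c321; exists i, j, k; split => //; lia.
  - move=> i j k l H1 H2 H3 H4 H5 H6 H7.
    have := allP avrot 0; rewrite /cycle_form size_map size_iota mem_iota rot0.
    move=> /(_ ltac:(lia)) /negP; apply; apply/c1342.
    exists i, j, k, l; split => //; split; lia.
exists (Ordinal Ha); apply/permP => i; apply: ord_inj.
by rewrite -perm_natE Hfa // permE /gfun inordK ?Fp_lt.
Qed.

Theorem lemma3p4 (n : nat) (hn : 3 <= n) :
  #|[set s : 'S_n | [&& cyclic_perm s,
                        avoids (one_line s) [:: 3; 2; 1] &
                        all_rotations_avoid (cycle_form s) [:: 1; 3; 4; 2]]]|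
  = n - 1.
Proof.
case: n hn => [//|n] hn.
have hn' : 2 <= n by lia.
rewrite subn1 /=.
rewrite -[n in RHS]card_ord -cardsT -(card_imset _ (@gperm_inj n)).
apply: eq_card => s; rewrite inE; apply/idP/imsetP.
  by move=> /(g_surj hn') [a ->]; exists a.
by case=> a _ ->; apply: g_in.
Qed.
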